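(* Let $T:X\to X$ be a continuous map of a compact metric space $X$ which is not minimal. If $\mu$ is an ergodic $T$-invariant Borel probability measure with full support ($S_\mu=X$), then $\mu(A(T))=0$.
   Context: $T$ is minimal if for every $y\in X$, $\omega_T(y)=X$. $S_\mu$ is the support of $\mu$. $A(T)$ is the set of almost periodic points: $x$ such that for every open $U\ni x$ there is $N>0$ such that for every $n\ge1$ there exists $k\in[n,n+N]$ with $T^kx\in U$. *)

(* Defs.v *)
From HB Require Import structures.
From mathcomp Require Import all_boot all_order all_algebra.
From mathcomp Require Import all_classical all_reals all_analysis.
Set Implicit Arguments. Unset Strict Implicit. Unset Printing Implicit Defensive.
Import Order.TTheory GRing.Theory Num.Theory.
Local Open Scope classical_set_scope.
Local Open Scope ring_scope.

Notation borel X := (g_sigma_algebraType (@open X)).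

Section dyn.
Context {X : ptopologicalType}.
Implicit Types (T : X -> X).

Definition omega_limit T (y : X) : set X :=
  \bigcap_(N in [set: nat]) closure [set iter n T y | n in [set n | (N <= n)%N]].

Definition minimal T : Prop := forall y : X, omega_limit T y = [set: X].

Definition almost_periodic T : set X :=
  [set x | forall U : set X, open U -> U x ->
     exists N : nat, (0 < N)%N /\
       forall n : nat, (1 <= n)%N -> exists k : nat,
         (n <= k <= n + N)%N /\ U (iter k T x)].
End dyn.

Section meas.
Context {X : ptopologicalType} {R : realType}.
Local Open Scope ereal_scope.

Definition invariant_measure (T : X -> X) (mu : set (borel X) -> \bar R) : Prop :=
  forall A : set (borel X), measurable A -> mu (T @^-1` A) = mu A.

Definition ergodic (T : X -> X) (mu : set (borel X) -> \bar R) : Prop :=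
  invariant_measure T mu /\
  forall A : set (borel X), measurable A -> T @^-1` A = A ->
    mu A = 0 \/ mu A = 1.

Definition msupport (mu : set (borel X) -> \bar R) : set X :=
  [set x | forall U : set X, open U -> U x -> 0 < mu U].
End meas.

(* Main.v *)
Require Import Defs.
Set Warnings "-all".
From HB Require Import structures.
From mathcomp Require Import all_boot all_order all_algebra.
From mathcomp Require Import all_classical all_reals all_analysis.
From mathcomp Require Import lra.
Import Order.TTheory GRing.Theory Num.Theory.
Local Open Scope classical_set_scope.
Local Open Scope ring_scope.

Section Aux.
Context {R : realType} {X : pseudoPMetricType R} (T : X -> X) (cT : continuous T).

Lemma iter_cont n : continuous (iter n T).
Proof.
elim: n => [|n IH] x /=; first exact: cvg_id.
apply: continuous_comp; [exact: IH | exact: cT].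
Qed.

Lemma open_iter n (U : set X) : open U -> open ((iter n T) @^-1` U).
Proof. by move=> oU; apply: (proj1 (continuousP _) (iter_cont n)). Qed.

Lemma open_meas (U : set X) : open U -> measurable (U : set (borel X)).
Proof. by move=> oU; apply: sub_sigma_algebra. Qed.

Definition W (U : set X) (N : nat) : set X :=
  \bigcup_(n in [set: nat]) (iter (n + N) T) @^-1` U.

Definition C (U : set X) : set X := \bigcap_(N in [set: nat]) W U N.

Lemma C_inv U : T @^-1` C U = C U.
Proof.
apply/seteqP; split => x; rewrite /C /W /= => H N _.
- have [m _ Hm] := H N I; exists m.+1 => //=.
  by move: Hm; rewrite /= -iterSr.
- have [k _ Hk] := H N.+1 I; exists k => //=.
  by rewrite -iterSr -addnS.
Qed.

Lemma W_meas U N : open U -> measurable (W U N : set (borel X)).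
Proof.
move=> oU; apply: bigcupT_measurable => n; apply: open_meas; exact: open_iter.
Qed.

Lemma C_meas U : open U -> measurable (C U : set (borel X)).
Proof.
move=> oU; apply: bigcapT_measurable => N; exact: W_meas.
Qed.

End Aux.

Section Meas.
Context (R : realType) (X : pseudoPMetricType R) (T : X -> X) (cT : continuous T)
  (mu : probability (borel X) R) (erg : ergodic T mu) (full : msupport mu = [set: X]).

Local Open Scope ereal_scope.

Lemma iter_inv n (U : set X) : open U -> mu ((iter n T) @^-1` U) = mu U.
Proof.
move=> oU; elim: n => [//|n IH].
have -> : (iter n.+1 T) @^-1` U = T @^-1` ((iter n T) @^-1` U).
  by apply/seteqP; split => x /=; rewrite -iterSr.
by rewrite erg.1 //; apply: open_meas; exact: open_iter.
Qed.

Lemma C_full (U : set X) : open U -> U !=set0 -> mu (~` C T U) = 0.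
Proof.
move=> oU [c Uc].
have mC := C_meas _ cT _ oU.
have posU : 0 < mu U.
  have : msupport mu c by rewrite full.
  by move=> /(_ U oU Uc).
have leU : mu U <= mu (C T U).
  have cv := @nonincreasing_cvg_mu _ _ R mu (W T U) _ (fun N => W_meas _ cT _ N oU) mC _.
  have {}cv := cv (le_lt_trans (probability_le1 _ (W_meas _ cT _ 0 oU)) (ltry _)).
  have ni : nonincreasing_seq (W T U).
    move=> n m nm; apply/subsetPset => x [k _ Hk].
    exists (k + (m - n))%N => //; by rewrite /= -addnA subnK.
  have {}cv := cv ni.
  rewrite -(cvg_lim _ cv) //; apply: lime_ge; first by apply/cvg_ex; exists (mu (C T U)).
  near=> n => /=.
  rewrite -(iter_inv n U oU); apply: le_measure; rewrite ?inE.
  - by apply: open_meas; exact: open_iter.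
  - exact: W_meas.
  - by move=> x Hx; exists 0%N.
have mC1 : mu (C T U) = 1.
  case: (erg.2 _ mC (C_inv T U)) => // C0.
  by move: (lt_le_trans posU leU); rewrite C0 ltxx.
by rewrite probability_setC // mC1 subee.
Unshelve. all: end_near.
Qed.

End Meas.

Section Top.
Context {R : realType} {X : pseudoPMetricType R} (T : X -> X) (cT : continuous T).

Lemma cover_seq (cX : compact [set: X]) (r : R) : 0 < r ->
  exists s : seq X, forall z, exists2 c, c \in s & ball c r z.
Proof.
move=> r0; rewrite compact_cover in cX.
have [D' _ cov] := cX X setT (fun c => (ball c r)°) (fun c _ => open_interior _)
  (fun z _ => ex_intro2 _ _ z I (nbhsx_ballx z r r0)).
exists (finmap.enum_fset D') => z; have [c Dc hc] := cov z I.
by exists c => //; exact: interior_subset.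
Qed.

Lemma minimal_of x : almost_periodic T x ->
  (forall z e N, 0 < e -> exists n, (N <= n)%N /\ ball z e (iter n T x)) ->
  minimal T.
Proof.
move=> ap D y; apply/seteqP; split => // z _ N _ V /nbhs_ballP [e /= e0 hV].
pose d := e / 4.
have d0 : 0 < d by rewrite /d divr_gt0.
have [m [_ hm]] := D z d 0%N d0.
pose q := iter m T x.
pose U0 := (iter m T) @^-1` (ball q d)°.
have oU0 : open U0 := open_iter T cT m _ (open_interior _).
have U0x : U0 x by exact: (nbhsx_ballx q d d0).
have [Nap [Np H]] := ap U0 oU0 U0x.
pose G i := (iter (m + i) T) @^-1` closure (ball q d).
pose F := \bigcup_(i in `I_Nap.+1) G i.
have cF : closed F.
  apply: closed_bigcup; first exact: finite_II.
  move=> i _; apply: (proj1 (continuous_closedP _) (iter_cont T cT (m + i))).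
  exact: closed_closure.
have tailF : forall j, (1 <= j)%N -> F (iter j T x).
  move=> j j1; have [k [/andP [jk kj] Uk]] := H j j1.
  exists (k - j)%N; first by rewrite /= ltnS leq_subLR.
  rewrite /G /= -iterD -addnA subnK // iterD.
  by apply: subset_closure; exact: interior_subset.
pose w := iter N T y.
have wF : F w.
  have : closure [set iter j T x | j in [set j | (1 <= j)%N]] w.
    move=> B /nbhs_ballP [eps /= eps0 hB].
    have [n [n1 hn]] := D w eps 1%N eps0.
    by exists (iter n T x); split; [exists n | apply: hB].
  have sub : [set iter j T x | j in [set j | (1 <= j)%N]] `<=` F.
    by move=> p [j j1 <-]; exact: tailF.
  by move/(closureS sub); rewrite -(proj1 (closure_id F) cF).
have [i iN Gi] := wF.
have [p' [bq bp]] := Gi _ (nbhsx_ballx _ _ d0).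
exists (iter (m + i + N) T y); split.
  by exists (m + i + N)%N => //=; exact: leq_addl.
apply: hV.
have t : iter (m + i + N) T y = iter (m + i) T w by rewrite iterD.
rewrite t.
have b3 := ball_triangle (ball_triangle hm bq) (ball_sym bp).
by apply: (le_ball _ b3); rewrite /d; lra.
Qed.

End Top.

Theorem mainTheorem13 (R : realType) (X : pseudoPMetricType R)
    (hX : hausdorff_space X) (cX : compact [set: X])
    (T : X -> X) (cT : continuous T) (nmin : ~ minimal T)
    (mu : probability (borel X) R)
    (erg : ergodic T mu) (full : msupport mu = [set: X]) :
  mu.-negligible (almost_periodic T).
Proof.
have : forall k : nat, exists s : seq X,
    forall z, exists2 c, c \in s & ball c (k.+1%:R^-1 : R) z.
  by move=> k; apply: cover_seq => //; rewrite invr_gt0 ltr0n.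
move=> /choice [s hs].
pose Bad : set X := \bigcup_k \bigcup_i
  ~` C T ((ball (nth point (s k) i) (k.+1%:R^-1 : R))°).
have nB : mu.-negligible Bad.
  apply: negligible_bigcup => k; apply: negligible_bigcup => i.
  have r0 : 0 < (k.+1%:R^-1 : R) by rewrite invr_gt0 ltr0n.
  exists (~` C T ((ball (nth point (s k) i) (k.+1%:R^-1 : R))°)); split => //.
  - by apply: measurableC; apply: C_meas => //; exact: open_interior.
  - apply: C_full => //; first exact: open_interior.
    by exists (nth point (s k) i); exact: nbhsx_ballx.
have AB : almost_periodic T `<=` Bad.
  move=> x ax; apply: contrapT => nBx; apply: nmin; apply: (minimal_of T cT x ax).
  move=> z e N e0.
  have e20 : 0 < e / 2 by rewrite divr_gt0.
  have [k _ /(_ k (leqnn _)) hk] := near_infty_natSinv_lt (PosNum e20).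
  have [c cs hc] := hs k z.
  have nthc : nth point (s k) (index c (s k)) = c by apply: nth_index.
  have Cx : C T ((ball c (k.+1%:R^-1 : R))°) x.
    apply: contrapT => nC; apply: nBx; exists k => //.
    by exists (index c (s k)) => //; rewrite /= nthc.
  have [n _ Hn] := Cx N I.
  exists (n + N)%N; split; first exact: leq_addl.
  have b := ball_triangle (ball_sym hc) (interior_subset Hn).
  apply: (le_ball _ b); move: hk => /= hk.
  by rewrite [leRHS](splitr e); apply: lerD; exact: ltW.
have [A [mA muA BA]] := nB; exists A; split => //.
exact: subset_trans AB BA.
Qed.
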